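(* Let $(T_1,\dots,T_k)$ be a tuple of contractions on a Hilbert space $\mathcal{H}$ and $q_{ij}\in\mathbb{T}$ ($1\le i<j\le k$) such that $T_iT_j=q_{ij}T_jT_i$ and $T_iT_j^*=\overline{q_{ij}}\,T_j^*T_i$ for $1\le i<j\le k$. Then for every subset $u\subseteq\{1,\dots,k\}$, \[ S(u)=\sum_{v\subseteq u}(-1)^{|v|}(T^{e(v)})^*T^{e(v)}\ge 0, \] where for $v=\{n_1<\dots<n_r\}$, $T^{e(v)}=T_{n_1}\cdots T_{n_r}$ (and $T^{e(\emptyset)}=I$). *)

(* Defs.v *)
From HB Require Import structures.
From mathcomp Require Import all_boot all_order all_algebra.
From mathcomp Require Import complex.
From mathcomp Require Import reals.
Set Implicit Arguments. Unset Strict Implicit. Unset Printing Implicit Defensive.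
Import Order.TTheory GRing.Theory Num.Theory.
Local Open Scope ring_scope.

Section Hilbert.
Variables (R : realType) (V : lmodType R[i]) (ip : V -> V -> R[i]).

Definition hnorm (x : V) : R := Num.sqrt (complex.Re (ip x x)).

Definition is_inner_product : Prop :=
  [/\ (forall (a : R[i]) (x y z : V), ip (a *: x + y) z = a * ip x z + ip y z),
      (forall x y : V, ip y x = (ip x y)^*),
      (forall x : V, 0 <= ip x x) &
      (forall x : V, ip x x = 0 -> x = 0)].

Definition hcauchy (u : nat -> V) : Prop :=
  forall e : R, 0 < e -> exists N : nat,
    forall m n : nat, (N <= m)%N -> (N <= n)%N -> hnorm (u m - u n) < e.

Definition hconverges (u : nat -> V) : Prop :=
  exists l : V, forall e : R, 0 < e -> exists N : nat,
    forall n : nat, (N <= n)%N -> hnorm (u n - l) < e.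

Definition is_hilbert_space : Prop :=
  is_inner_product /\ (forall u : nat -> V, hcauchy u -> hconverges u).

Definition is_linear_op (T : V -> V) : Prop :=
  forall (a : R[i]) (x y : V), T (a *: x + y) = a *: T x + T y.

Definition is_contraction (T : V -> V) : Prop :=
  is_linear_op T /\ forall x : V, hnorm (T x) <= hnorm x.

Definition is_adjoint (T Ts : V -> V) : Prop :=
  forall x y : V, ip (T x) y = ip x (Ts y).

Definition is_positive_op (S : V -> V) : Prop :=
  forall x : V, 0 <= ip (S x) x.

Definition Tmono (k : nat) (T : 'I_k -> V -> V) (v : {set 'I_k}) : V -> V :=
  foldr (fun i f => T i \o f) id (enum v).

Definition Tmono_adj (k : nat) (Ts : 'I_k -> V -> V) (v : {set 'I_k}) : V -> V :=
  foldr (fun i f => f \o Ts i) id (enum v).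

Definition Sop (k : nat) (T Ts : 'I_k -> V -> V) (u : {set 'I_k}) : V -> V :=
  fun x => \sum_(v : {set 'I_k} | v \subset u)
             (-1) ^+ #|v| *: Tmono_adj Ts v (Tmono T v x).

End Hilbert.

(* Main.v *)
Require Import Defs.
From HB Require Import structures.
From mathcomp Require Import all_boot all_order all_algebra.
From mathcomp Require Import complex.
From mathcomp Require Import reals.
From mathcomp Require Import ring lra.
Import Order.TTheory GRing.Theory Num.Theory.
Local Open Scope ring_scope.

Section Prf.
Variables (R : realType) (V : lmodType R[i]) (ip : V -> V -> R[i]).
Variable k : nat.
Variables (T Ts : 'I_k -> V -> V) (q : 'I_k -> 'I_k -> R[i]).
Hypothesis ipD : forall a x y z, ip (a *: x + y) z = a * ip x z + ip y z.
Hypothesis ipC : forall x y, ip y x = (ip x y)^*.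
Hypothesis ipge0 : forall x, 0 <= ip x x.
Hypothesis Tlin : forall i a x y, T i (a *: x + y) = a *: T i x + T i y.
Hypothesis Tadj : forall i x y, ip (T i x) y = ip x (Ts i y).
Hypothesis TT : forall i j : 'I_k, (i < j)%N -> forall x,
  T i (T j x) = q i j *: T j (T i x).
Hypothesis TTs : forall i j : 'I_k, (i < j)%N -> forall x,
  T i (Ts j x) = (q i j)^* *: Ts j (T i x).

Definition N (x : V) : R := complex.Re (ip x x).
Hypothesis Tcontr : forall i x, N (T i x) <= N x.

Lemma ip0l z : ip 0 z = 0.
Proof.
have H := ipD 1 0 0 z; rewrite scaler0 add0r mul1r in H.
by apply: (addrI (ip 0 z)); rewrite addr0 -H.
Qed.

Lemma ipDl x y z : ip (x + y) z = ip x z + ip y z.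
Proof. by have := ipD 1 x y z; rewrite scale1r mul1r. Qed.

Lemma ipZl a x z : ip (a *: x) z = a * ip x z.
Proof. by have := ipD a x 0 z; rewrite !addr0 ip0l addr0. Qed.

Lemma ipZr a x z : ip z (a *: x) = a^* * ip z x.
Proof. by rewrite ipC ipZl rmorphM /= -ipC. Qed.

Lemma ipDr x y z : ip z (x + y) = ip z x + ip z y.
Proof. by rewrite ipC ipDl rmorphD /= -!ipC. Qed.

Lemma ipxx x : ip x x = (N x)%:C%C.
Proof.
move: (ipge0 x); rewrite /N; case: (ip x x) => a b.
by rewrite lecE /= => /andP[/eqP -> _].
Qed.

Lemma N_ge0 x : 0 <= N x.
Proof. by move: (ipge0 x); rewrite ipxx ler0c. Qed.

Lemma ReJ (z : R[i]) : complex.Re (z^*) = complex.Re z.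
Proof. by case: z. Qed.

Lemma T0 i : T i 0 = 0.
Proof.
have H := Tlin i 1 0 0; rewrite scaler0 add0r scale1r in H.
by apply: (addrI (T i 0)); rewrite addr0 -H.
Qed.

Lemma TD i x y : T i (x + y) = T i x + T i y.
Proof. by have := Tlin i 1 x y; rewrite !scale1r. Qed.

Lemma TZ i a x : T i (a *: x) = a *: T i x.
Proof. by have := Tlin i a x 0; rewrite !addr0 T0 addr0. Qed.

Lemma Tsadj i y z : ip (Ts i y) z = ip y (T i z).
Proof. by rewrite ipC -Tadj -ipC. Qed.

Definition Tl (l : seq 'I_k) : V -> V := foldr (fun i f => T i \o f) id l.
Definition Tsl (l : seq 'I_k) : V -> V := foldr (fun i f => f \o Ts i) id l.

Lemma Tl_adj l y x : ip (Tsl l y) x = ip y (Tl l x).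
Proof.
elim: l y => [|i l IH] y //=.
by rewrite IH Tsadj.
Qed.

Lemma TlD l x y : Tl l (x + y) = Tl l x + Tl l y.
Proof. by elim: l => [|i l IH] //=; rewrite IH TD. Qed.

Lemma TlZ l a x : Tl l (a *: x) = a *: Tl l x.
Proof. by elim: l => [|i l IH] //=; rewrite IH TZ. Qed.

Lemma Tl_contr l x : N (Tl l x) <= N x.
Proof.
elim: l => [|i l IH] //=; exact: le_trans (Tcontr _ _) IH.
Qed.

Lemma Tl_comm l (S : V -> V) (f : 'I_k -> R[i]) :
  (forall i, i \in l -> forall w, T i (S w) = f i *: S (T i w)) ->
  forall w, Tl l (S w) = (\prod_(i <- l) f i) *: S (Tl l w).
Proof.
elim: l => [|i l IH] H w /=; first by rewrite big_nil scale1r.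
rewrite IH; last by move=> i' il; apply: H; rewrite inE il orbT.
rewrite TZ H ?inE ?eqxx // scalerA big_cons mulrC.
done.
Qed.

Lemma Tl_rcons l j x : Tl (rcons l j) x = Tl l (T j x).
Proof. by elim: l => [|i l IH] //=; rewrite IH. Qed.


Lemma ReD (z w : R[i]) : complex.Re (z + w) = complex.Re z + complex.Re w.
Proof. by case: z; case: w. Qed.

Lemma ReMR (t : R) (z : R[i]) : complex.Re ((t%:C)%C * z) = t * complex.Re z.
Proof. by case: z => a b /=; rewrite mul0r subr0. Qed.

Lemma quad (A B C : R) : (forall s, 0 <= A + 2 * s * B + s ^+ 2 * C) ->
  0 <= A -> 0 <= C -> B ^+ 2 <= A * C.
Proof.
move=> H hA hC.
have [C0|Cpos] := eqVneq C 0.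
  rewrite C0 mulr0.
  have [B0|Bn0] := eqVneq B 0; first by rewrite B0 expr0n.
  have := H (- (A + 1) / (2 * B)).
  rewrite C0 mulr0 addr0.
  have -> : 2 * (- (A + 1) / (2 * B)) * B = - (A + 1) by field; rewrite Bn0.
  lra.
have Cp : 0 < C by rewrite lt_def Cpos hC.
have := H (- B / C).
have -> : A + 2 * (- B / C) * B + (- B / C) ^+ 2 * C = A - B ^+ 2 / C.
  by field.
rewrite subr_ge0 ler_pdivrMr //.
Qed.

Lemma CS (f : V -> V -> R) :
  (forall x y z, f (x + y) z = f x z + f y z) ->
  (forall (t : R) x z, f ((t%:C)%C *: x) z = t * f x z) ->
  (forall x y, f x y = f y x) ->
  (forall x, 0 <= f x x) ->
  forall x y, f x y ^+ 2 <= f x x * f y y.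
Proof.
move=> fD fZ fs fp x y.
have fDr a b c : f c (a + b) = f c a + f c b by rewrite fs fD !(fs c).
have fZr t a c : f c ((t%:C)%C *: a) = t * f c a by rewrite fs fZ fs.
apply: quad; last 2 first; [exact: fp | exact: fp |].
move=> s; have := fp (x + (s%:C)%C *: y).
rewrite fD fZ !fDr !fZr (fs y x).
have -> : f x x + s * f x y + s * (f x y + s * f y y) =
  f x x + 2 * s * f x y + s ^+ 2 * f y y by ring.
done.
Qed.

Lemma Ts_contr i w : N (Ts i w) <= N w.
Proof.
pose f x y := complex.Re (ip x y).
have h := @CS f.
have e : N (Ts i w) = f w (T i (Ts i w)) by rewrite /N /f Tsadj.
have t1 := Tcontr i (Ts i w).
have t2 := N_ge0 (Ts i w). have t3 := N_ge0 w. have t4 := N_ge0 (T i (Ts i w)).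
have : N (Ts i w) ^+ 2 <= N w * N (Ts i w).
  rewrite {1}e; apply: le_trans (h _ _ _ _ w (T i (Ts i w))) _.
  - by move=> x y z; rewrite /f ipDl ReD.
  - by move=> t x z; rewrite /f ipZl ReMR.
  - by move=> x y; rewrite /f ipC ReJ.
  - by move=> x; exact: N_ge0.
  - by apply: ler_wpM2l => //.
nra.
Qed.


Definition b (u : {set 'I_k}) (x y : V) : R :=
  \sum_(v : {set 'I_k} | v \subset u)
     (-1) ^+ #|v| * complex.Re (ip (Tl (enum v) x) (Tl (enum v) y)).

Lemma bDl (u : {set 'I_k}) x y z : b u (x + y) z = b u x z + b u y z.
Proof.
rewrite /b -big_split /=; apply: eq_bigr => v _.
by rewrite TlD ipDl ReD mulrDr.
Qed.

Lemma bZl (u : {set 'I_k}) (t : R) x z : b u ((t%:C)%C *: x) z = t * b u x z.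
Proof.
rewrite /b mulr_sumr; apply: eq_bigr => v _.
by rewrite TlZ ipZl ReMR mulrCA.
Qed.

Lemma bsym (u : {set 'I_k}) x y : b u x y = b u y x.
Proof. by apply: eq_bigr => v _; rewrite ipC ReJ. Qed.

Lemma enum_U1 (j : 'I_k) (v : {set 'I_k}) :
  (forall i, i \in v -> (i < j)%N) -> enum (j |: v) = rcons (enum v) j.
Proof.
move=> Hv.
have inc (A : {set 'I_k}) : sorted (fun a b : 'I_k => (a < b)%N) (enum A).
  have : sorted ltn (map val (enum A)).
    rewrite -[enum _](eq_filter (mem_enum _)).
    rewrite -(eq_filter (mem_map val_inj _)) -filter_map.
    by rewrite (sorted_filter ltn_trans) // unlock val_ord_enum iota_ltn_sorted.
  by rewrite sorted_map.
apply: (irr_sorted_eq (leT := fun a b : 'I_k => (a < b)%N)).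
- by move=> a c d; apply: ltn_trans.
- by move=> a; rewrite /= ltnn.
- exact: inc.
- have : all (fun a : 'I_k => (a < j)%N) (enum v).
    by apply/allP => a; rewrite mem_enum; apply: Hv.
  have := inc v.
  case: (enum v) => [|a s] // ps al.
  rewrite /= rcons_path; apply/andP; split => //.
  have : last a s \in a :: s by exact: mem_last.
  by move/(allP al).
- by move=> a; rewrite mem_enum mem_rcons !inE mem_enum.
Qed.

Lemma split_sum (F : {set 'I_k} -> R) (j : 'I_k) (u : {set 'I_k}) :
  j \notin u ->
  \sum_(v : {set 'I_k} | v \subset j |: u) F v =
  \sum_(v : {set 'I_k} | v \subset u) F v + \sum_(v : {set 'I_k} | v \subset u) F (j |: v).
Proof.
move=> ju.
rewrite (bigID (fun v : {set 'I_k} => j \in v)) /= addrC; congr (_ + _).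
  apply: eq_bigl => v.
  apply/andP/idP => [[/subsetP H jv]|H].
    apply/subsetP => x xv; have := H x xv; rewrite in_setU1 => /orP[/eqP xj|//].
    by move: jv; rewrite -xj xv.
  split; first exact: subset_trans H (subsetU1 j u).
  by apply: contra ju => jv; exact: (subsetP H) j jv.
rewrite (reindex_onto (fun w => j |: w) (fun v => v :\ j)) /=; last first.
  by move=> v /andP[_ jv]; rewrite setD1K.
apply: eq_bigl => w.
rewrite setU11 andbT.
apply/andP/idP => [[/subsetP H /eqP E]|H].
  have jw : j \notin w by rewrite -E setD11.
  apply/subsetP => x xw.
  have := H x; rewrite !in_setU1 xw orbT => /(_ isT) /orP[/eqP xj|//].
  by move: jw; rewrite -xj xw.
have jw : j \notin w by apply: contra ju => jw; exact: (subsetP H) j jw.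
by rewrite setUS // setU1K.
Qed.

Lemma b_rec (j : 'I_k) (u : {set 'I_k}) (x y : V) : j \notin u -> (forall i, i \in u -> (i < j)%N) ->
  b (j |: u) x y = b u x y - b u (T j x) (T j y).
Proof.
move=> ju Hu.
rewrite /b split_sum //; congr (_ + _).
rewrite -sumrN; apply: eq_bigr => v vu.
have jv : j \notin v by apply: contra ju => jv; exact: (subsetP vu) j jv.
rewrite enum_U1; last by move=> i iv; apply: Hu; exact: (subsetP vu) i iv.
by rewrite !Tl_rcons cardsU1 jv add1n exprS mulN1r mulNr.
Qed.

Lemma b_adj (j : 'I_k) (u : {set 'I_k}) (x y : V) : (forall i, i \in u -> (i < j)%N) ->
  b u (T j x) y = b u x (Ts j y).
Proof.
move=> Hu; apply: eq_bigr => v vu; congr (_ * _).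
have Hl : forall i, i \in enum v -> (i < j)%N.
  by move=> i; rewrite mem_enum => iv; apply: Hu; exact: (subsetP vu) i iv.
rewrite (@Tl_comm _ (T j) (fun i => q i j)); last by move=> i il w; apply: TT; apply: Hl.
rewrite (@Tl_comm _ (Ts j) (fun i => (q i j)^*)); last by move=> i il w; apply: TTs; apply: Hl.
rewrite ipZl ipZr Tadj rmorph_prod /=.
by congr (complex.Re (_ * _)); apply: eq_bigr => i _; rewrite conjCK.
Qed.


Lemma final_real (a : nat -> R) (c K : R) : 0 <= c ->
  (forall n, a n ^+ 2 <= a n.+1 * c) -> (forall n, a n <= K) -> a 0%N <= c.
Proof.
move=> c0 Ha HK; rewrite leNgt; apply/negP => lt.
have [cz|cnz] := eqVneq c 0.
  have := Ha 0%N; rewrite cz mulr0; rewrite cz in lt; nra.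
have cp : 0 < c by rewrite lt_def cnz c0.
pose d := a 0%N - c.
have dp : 0 < d by rewrite /d subr_gt0.
have claim : forall n, c + (n.+1)%:R * d <= a n.
  elim=> [|n IH]; first by rewrite /d mul1r addrC subrK.
  have hn : 0 <= (n%:R : R) by rewrite ler0n.
  have := Ha n.
  move=> h.
  rewrite -!natr1 in IH *.
  have L0 : 0 <= c + (n%:R + 1) * d by nra.
  have h2 : (c + (n%:R + 1) * d) ^+ 2 <= a n ^+ 2.
    by rewrite ler_sqr ?nnegrE //; apply: le_trans IH.
  have h5 := mulr_ge0 (mulr_ge0 hn (ltW cp)) (ltW dp).
  have h6 : 0 <= ((n%:R + 1) * d) ^+ 2 by rewrite sqr_ge0.
  have h4 : (c + (n%:R + 1 + 1) * d) * c <= (c + (n%:R + 1) * d) ^+ 2 by nra.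
  have h3 : (c + (n%:R + 1 + 1) * d) * c <= a n.+1 * c.
    by apply: le_trans h4 (le_trans h2 h).
  by rewrite ler_pM2r in h3.
have [m Hm] : exists m : nat, K / d < m%:R.
  exists (Num.Def.archi_bound (`|K| / d)).
  apply: le_lt_trans (archi_boundP _); last by rewrite divr_ge0 // ltW.
  by rewrite ler_pM2r ?invr_gt0 // ler_norm.
have := claim m; have := HK m.
rewrite ltr_pdivrMr // in Hm.
have : 0 <= (m%:R : R) by rewrite ler0n.
rewrite -natr1.
nra.
Qed.

Section Key.
Variables (j : 'I_k) (u : {set 'I_k}).
Hypothesis Hu : forall i, i \in u -> (i < j)%N.
Hypothesis psd : forall y, 0 <= b u y y.

Let P := fun z => Ts j (T j z).

Lemma bP z w : b u (P z) w = b u (T j z) (T j w).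
Proof. by rewrite /P bsym -b_adj // bsym. Qed.

Lemma bP_sym z w : b u (P z) w = b u z (P w).
Proof. by rewrite bP bsym -bP bsym. Qed.

Lemma biter m z w : b u (iter m P z) w = b u z (iter m P w).
Proof.
elim: m z w => [|m IH] z w //=.
by rewrite bP_sym IH -iterSr.
Qed.

Lemma biter2 m z : b u (iter (m + m) P z) z = b u (iter m P z) (iter m P z).
Proof. by rewrite iterD biter. Qed.

Lemma NP z : N (P z) <= N z.
Proof. exact: le_trans (Ts_contr _ _) (Tcontr _ _). Qed.

Lemma Niter m z : N (iter m P z) <= N z.
Proof. elim: m => [|m IH] //=; exact: le_trans (NP _) IH. Qed.

Lemma b_bound y x : N y <= N x -> b u y y <= \sum_(v : {set 'I_k} | v \subset u) N x.
Proof.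
move=> yx; apply: ler_sum => v _.
have h1 := Tl_contr (enum v) y.
have h2 := N_ge0 (Tl (enum v) y).
rewrite -signr_odd; case: (odd _); rewrite ?expr1 ?expr0 ?mulN1r ?mul1r;
  rewrite -/(N _); lra.
Qed.

Lemma CSb x y : b u x y ^+ 2 <= b u x x * b u y y.
Proof.
apply: CS => //; [exact: bDl | exact: bZl | exact: bsym].
Qed.

Lemma key x : b u (T j x) (T j x) <= b u x x.
Proof.
pose a n := b u (iter (2 ^ n) P x) x.
have -> : b u (T j x) (T j x) = a 0%N by rewrite /a /= bP.
apply: (@final_real a _ (\sum_(v : {set 'I_k} | v \subset u) N x)).
- exact: psd.
- move=> n; rewrite /a expnS mul2n -addnn biter2.
  apply: le_trans (CSb _ _) _.
  by [].
- case=> [|n]; rewrite /a.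
    rewrite /= bP; apply: b_bound; exact: Tcontr.
  rewrite expnS mul2n -addnn biter2; apply: b_bound; exact: Niter.
Qed.

End Key.

Lemma main_m m : forall u : {set 'I_k}, (forall i, i \in u -> (i < m)%N) ->
  forall x, 0 <= b u x x.
Proof.
elim: m => [|m IH] u Hu x.
  have -> : u = set0.
    by apply/setP => i; rewrite inE; apply/negbTE; apply/negP => /Hu.
  rewrite /b (eq_bigl (fun v => v == set0)); last by move=> v; rewrite subset0.
  by rewrite big_pred1_eq cards0 expr0 mul1r; exact: N_ge0.
case: (ltnP m k) => [mk|km]; last first.
  by apply: IH => i _; exact: leq_trans (ltn_ord i) km.
pose j := Ordinal mk.
case ju: (j \in u).
  have Hu' : forall i, i \in u :\ j -> (i < m)%N.
    move=> i; rewrite in_setD1 => /andP[ij iu].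
    have := Hu i iu; rewrite ltnS leq_eqVlt => /orP[/eqP im|//].
    have eij : i = j by apply: val_inj => /=; rewrite im.
    by rewrite eij eqxx in ij.
  rewrite -(setD1K ju) b_rec ?setD11 // subr_ge0.
  apply: key; first by [].
  exact: IH.
apply: IH => i iu.
have := Hu i iu; rewrite ltnS leq_eqVlt => /orP[/eqP im|//].
have eij : i = j by apply: val_inj => /=; rewrite im.
by rewrite -eij iu in ju.
Qed.


Lemma Sop_ip u x : ip (Sop T Ts u x) x = (b u x x)%:C%C.
Proof.
rewrite /Sop (big_morph (fun w => ip w x) (fun a c => ipDl a c x) (ip0l x)).
rewrite rmorph_sum; apply: eq_bigr => v _.
rewrite ipZl (Tl_adj (enum v)) ipxx rmorphM rmorphXn rmorphN1.
by [].
Qed.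

Lemma pos u x : 0 <= ip (Sop T Ts u x) x.
Proof.
rewrite Sop_ip ler0c; apply: (main_m k) => i _; exact: ltn_ord.
Qed.

End Prf.

Theorem proposition3p3 (R : realType) (V : lmodType R[i]) (ip : V -> V -> R[i])
  (k : nat) (T Ts : 'I_k -> V -> V) (q : 'I_k -> 'I_k -> R[i]) :
  is_hilbert_space ip ->
  (forall i, is_contraction ip (T i)) ->
  (forall i, is_adjoint ip (T i) (Ts i)) ->
  (forall i j : 'I_k, (i < j)%N -> `|q i j| = 1) ->
  (forall i j : 'I_k, (i < j)%N -> forall x : V,
      T i (T j x) = q i j *: T j (T i x)) ->
  (forall i j : 'I_k, (i < j)%N -> forall x : V,
      T i (Ts j x) = (q i j)^* *: Ts j (T i x)) ->
  forall u : {set 'I_k}, is_positive_op ip (Sop T Ts u).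
Proof.
move=> [[ipD ipC ipge0 _] _] Tc Tadj _ TT TTs u x.
have Tlin : forall i a x y, T i (a *: x + y) = a *: T i x + T i y.
  by move=> i; have [] := Tc i.
apply: (@pos R V ip k T Ts q ipD ipC ipge0 Tlin Tadj TT TTs) => i y.
have [_ H] := Tc i; move: (H y); rewrite /hnorm ler_sqrt //.
exact: (@N_ge0 R V ip ipge0).
Qed.
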